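(* Let $\epsilon>0$ and let $\Lambda_\epsilon\subset\mathbb{R}^d$ be an $\epsilon$-lattice. Then every $\mathbf{x}\in\mathbb{R}^d$ lies in the convex hull of $B_{7\epsilon}(\mathbf{x})\cap\Lambda_\epsilon$.
   Context: $\|\cdot\|$ is a fixed one of the $\ell_1,\ell_2,\ell_\infty$ norms and $B_r(\mathbf{x})=\{\mathbf{z}:\|\mathbf{z}-\mathbf{x}\|\le r\}$. A lattice is the set of integer combinations of a basis of $\mathbb{R}^d$. Its packing radius $r_p$ is the supremum of $r$ such that balls of radius $r$ around distinct lattice points are disjoint; its cover radius $r_c$ is the infimum of $r$ such that balls of radius $r$ around lattice points cover $\mathbb{R}^d$. An $\epsilon$-lattice is a lattice with $\epsilon=r_p\le r_c\le3\epsilon$. *)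

(* Defs.v *)
From HB Require Import structures.
From mathcomp Require Import all_boot all_order all_algebra.
From mathcomp Require Import boolp classical_sets reals.
Set Implicit Arguments. Unset Strict Implicit. Unset Printing Implicit Defensive.
Import Order.TTheory GRing.Theory Num.Theory.
Local Open Scope ring_scope.
Local Open Scope classical_set_scope.

Inductive normkind := L1 | L2 | Linf.

Definition pnorm (R : realType) (p : normkind) (d : nat) (x : 'rV[R]_d) : R :=
  match p with
  | L1 => \sum_(i < d) `|x ord0 i|
  | L2 => Num.sqrt (\sum_(i < d) (x ord0 i) ^+ 2)
  | Linf => \big[Num.max/0]_(i < d) `|x ord0 i|
  end.

Definition ball_p (R : realType) (p : normkind) (d : nat) (x : 'rV[R]_d) (r : R)
  : set 'rV[R]_d := [set z | pnorm p (z - x) <= r].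

Definition lattice (R : realType) (d : nat) (B : 'M[R]_d) : set 'rV[R]_d :=
  [set v | exists z : 'I_d -> int, v = \sum_(i < d) (z i)%:~R *: row i B].

Definition packing_radius (R : realType) (p : normkind) (d : nat) (B : 'M[R]_d) : R :=
  sup [set r : R | forall u v, lattice B u -> lattice B v -> u <> v ->
                   ball_p p u r `&` ball_p p v r = set0].

Definition cover_radius (R : realType) (p : normkind) (d : nat) (B : 'M[R]_d) : R :=
  inf [set r : R | forall x : 'rV[R]_d, exists u, lattice B u /\ ball_p p u r x].

Definition eps_lattice (R : realType) (p : normkind) (d : nat) (B : 'M[R]_d) (eps : R) : Prop :=
  packing_radius p B = eps /\ eps <= cover_radius p B /\ cover_radius p B <= 3 * eps.

Definition conv_hull (R : realType) (d : nat) (S : set 'rV[R]_d) : set 'rV[R]_d :=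
  [set x | exists (n : nat) (pt : 'I_n -> 'rV[R]_d) (lam : 'I_n -> R),
      (forall i, S (pt i)) /\ (forall i, 0 <= lam i) /\
      \sum_(i < n) lam i = 1 /\ x = \sum_(i < n) lam i *: pt i].

(* Main.v *)
Require Import Defs.
From mathcomp Require Import all_boot all_order all_algebra.
From mathcomp Require Import boolp classical_sets reals.
From mathcomp Require Import ring lra.
Import Order.TTheory GRing.Theory Num.Theory.
Local Open Scope ring_scope.
Local Open Scope classical_set_scope.

Set Implicit Arguments. Unset Strict Implicit. Unset Printing Implicit Defensive.

Section Helpers.
Variable R : realType.
Variable d : nat.
Implicit Types (a b c v w : 'rV[R]_d).

Definition dot c v : R := \sum_(i < d) c ord0 i * v ord0 i.

Lemma dotD c a b : dot c (a + b) = dot c a + dot c b.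
Proof. by rewrite /dot -big_split; apply: eq_bigr => i _; rewrite mxE mulrDr. Qed.

Lemma dotZ c s a : dot c (s *: a) = s * dot c a.
Proof. by rewrite /dot mulr_sumr; apply: eq_bigr => i _; rewrite mxE mulrCA. Qed.

Lemma dotN c a : dot c (- a) = - dot c a.
Proof. by rewrite /dot -sumrN; apply: eq_bigr => i _; rewrite mxE mulrN. Qed.

Lemma dotB c a b : dot c (a - b) = dot c a - dot c b.
Proof. by rewrite dotD dotN. Qed.

Lemma dotDl a b v : dot (a + b) v = dot a v + dot b v.
Proof. by rewrite /dot -big_split; apply: eq_bigr => i _; rewrite mxE mulrDl. Qed.

Lemma dotZl s a v : dot (s *: a) v = s * dot a v.
Proof. by rewrite /dot mulr_sumr; apply: eq_bigr => i _; rewrite mxE mulrA. Qed.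

Lemma dot_le_abs c v : dot c v <= \sum_(i < d) `|c ord0 i| * `|v ord0 i|.
Proof.
rewrite /dot; apply: ler_sum => i _; rewrite -normrM; exact: ler_norm.
Qed.

End Helpers.

Section Norms.
Variable R : realType.
Variable d : nat.
Implicit Types (a b c v w : 'rV[R]_d).

Lemma bigmax_ge0 (F : 'I_d -> R) : 0 <= \big[Num.max/0]_(i < d) F i.
Proof. by elim/big_rec: _ => // i y _ hy; rewrite le_max hy orbT. Qed.

Lemma le_bigmaxR (F : 'I_d -> R) j : F j <= \big[Num.max/0]_(i < d) F i.
Proof. exact: le_bigmax. Qed.

Lemma sumsq_ge0 a : 0 <= \sum_(i < d) a ord0 i ^+ 2.
Proof. by apply: sumr_ge0 => i _; rewrite sqr_ge0. Qed.

Lemma CS a b : dot a b <= pnorm L2 a * pnorm L2 b.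
Proof.
rewrite /=. set A := Num.sqrt _. set B := Num.sqrt _.
have hA : 0 <= A by exact: sqrtr_ge0.
have hB : 0 <= B by exact: sqrtr_ge0.
have hA2 : A ^+ 2 = \sum_(i < d) a ord0 i ^+ 2 by rewrite sqr_sqrtr // sumsq_ge0.
have hB2 : B ^+ 2 = \sum_(i < d) b ord0 i ^+ 2 by rewrite sqr_sqrtr // sumsq_ge0.
have key : 0 <= \sum_(i < d) (B * a ord0 i - A * b ord0 i) ^+ 2.
  by apply: sumr_ge0 => i _; rewrite sqr_ge0.
have e : \sum_(i < d) (B * a ord0 i - A * b ord0 i) ^+ 2
   = B ^+ 2 * A ^+ 2 + A ^+ 2 * B ^+ 2 - 2 * A * B * dot a b.
  transitivity (\sum_(i < d) (B ^+ 2 * a ord0 i ^+ 2 + A ^+ 2 * b ord0 i ^+ 2)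
      - \sum_(i < d) (2 * A * B * (a ord0 i * b ord0 i))).
    by rewrite -sumrB; apply: eq_bigr => i _; ring.
  by rewrite big_split /= -!mulr_sumr -hA2 -hB2.
rewrite e in key.
have [AB0|ABpos] := eqVneq (A * B) 0.
  have [A0|B0] : A = 0 \/ B = 0 by move/eqP: AB0; rewrite mulf_eq0 => /orP[]/eqP; auto.
  - have z : forall i, a ord0 i = 0.
      move=> i; have := A0; move/eqP; rewrite sqrtr_eq0 => h.
      have h0 : \sum_(i < d) a ord0 i ^+ 2 = 0 by apply/eqP; rewrite eq_le h sumsq_ge0.
      by apply/eqP; rewrite -sqrf_eq0; apply/eqP; apply: (psumr_eq0P _ h0) => // k _; rewrite sqr_ge0.
    by rewrite /dot big1 ?mulr0 ?A0 ?mul0r // => i _; rewrite z mul0r.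
  - have z : forall i, b ord0 i = 0.
      move=> i; have := B0; move/eqP; rewrite sqrtr_eq0 => h.
      have h0 : \sum_(i < d) b ord0 i ^+ 2 = 0 by apply/eqP; rewrite eq_le h sumsq_ge0.
      by apply/eqP; rewrite -sqrf_eq0; apply/eqP; apply: (psumr_eq0P _ h0) => // k _; rewrite sqr_ge0.
    by rewrite /dot big1 ?mulr0 ?B0 ?mulr0 // => i _; rewrite z mulr0.
have ABp : 0 < A * B by rewrite lt_def ABpos mulr_ge0.
nra.
Qed.

Lemma pnorm_ge0 p a : 0 <= pnorm p a.
Proof.
case: p => /=; [by apply: sumr_ge0 | exact: sqrtr_ge0 | exact: bigmax_ge0].
Qed.

Lemma pnormN p a : pnorm p (- a) = pnorm p a.
Proof.
case: p => /=.
- by apply: eq_bigr => i _; rewrite mxE normrN.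
- by congr Num.sqrt; apply: eq_bigr => i _; rewrite mxE sqrrN.
- by apply: eq_bigr => i _; rewrite mxE normrN.
Qed.

Lemma pnormZ p s a : 0 <= s -> pnorm p (s *: a) = s * pnorm p a.
Proof.
move=> hs; case: p => /=.
- by rewrite mulr_sumr; apply: eq_bigr => i _; rewrite mxE normrM ger0_norm.
- rewrite -[X in X * _](ger0_norm hs) -sqrtr_sqr -sqrtrM ?sqr_ge0 // mulr_sumr.
  by congr Num.sqrt; apply: eq_bigr => i _; rewrite mxE exprMn.
- elim/big_rec2: _ => [|i y1 y2 _ ->]; first by rewrite mulr0.
  by rewrite mxE normrM (ger0_norm hs) maxr_pMr.
Qed.

Lemma pnormD p a b : pnorm p (a + b) <= pnorm p a + pnorm p b.
Proof.
case: p.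
- rewrite /= -big_split; apply: ler_sum => i _; rewrite mxE; exact: ler_normD.
- have hab := CS a b.
  have ha := pnorm_ge0 L2 a; have hb := pnorm_ge0 L2 b.
  rewrite /= in hab ha hb *.
  rewrite -(ger0_norm (addr_ge0 ha hb)) -sqrtr_sqr ler_sqrt ?sqr_ge0 //.
  rewrite sqrrD !sqr_sqrtr ?sumsq_ge0 //.
  have -> : \sum_(i < d) (a + b) ord0 i ^+ 2 =
     \sum_(i < d) a ord0 i ^+ 2 + \sum_(i < d) b ord0 i ^+ 2 + 2 * dot a b.
    rewrite /dot mulr_sumr -!big_split /=; apply: eq_bigr => i _; rewrite mxE; ring.
  lra.
- rewrite /=; apply: bigmax_le => [|i _].
    by apply: addr_ge0; apply: bigmax_ge0.
  rewrite mxE; apply: (le_trans (ler_normD _ _)); apply: lerD; exact: le_bigmaxR.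
Qed.

End Norms.

Section Dual.
Variable R : realType.
Variable d : nat.
Implicit Types (a b c v w : 'rV[R]_d).

Definition sgn1 (x : R) : R := if 0 <= x then 1 else -1.
Lemma sgn1_mul x : x * sgn1 x = `|x|.
Proof. by rewrite /sgn1; case: ifP => h; [rewrite mulr1 ger0_norm | rewrite mulrN1 ltr0_norm // ltNge h]. Qed.
Lemma sgn1_norm x : `|sgn1 x| = 1.
Proof. by rewrite /sgn1; case: ifP => _; rewrite ?normrN normr1. Qed.

Lemma dual p c : (exists i, c ord0 i != 0) -> exists w K, 0 < K /\ pnorm p w <= 1 /\
  dot c w = K /\ forall v, dot c v <= K * pnorm p v.
Proof.
move=> [i0 hi0].
have ci0 : 0 < `|c ord0 i0| by rewrite normr_gt0.
case: p.
-
  case: (@arg_maxP _ R _ i0 xpredT (fun i => `|c ord0 i|) erefl) => j _ hj.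
  pose w : 'rV[R]_d := \row_i (if i == j then sgn1 (c ord0 j) else 0).
  have hw : forall (F : 'I_d -> R), \sum_(i < d) F i * w ord0 i = F j * sgn1 (c ord0 j).
    move=> F; rewrite (bigD1 j) //= big1 ?addr0 => [|i hij]; first by rewrite mxE eqxx.
    by rewrite mxE (negbTE hij) mulr0.
  exists w, `|c ord0 j|; split; first exact: lt_le_trans ci0 (hj i0 erefl).
  split.
    rewrite /= (bigD1 j) //= big1 ?addr0 => [|i hij]; first by rewrite mxE eqxx sgn1_norm.
    by rewrite mxE (negbTE hij) normr0.
  split; first by rewrite /dot hw sgn1_mul.
  move=> v; apply: (le_trans (dot_le_abs c v)); rewrite /= mulr_sumr.
  apply: ler_sum => i _; apply: ler_wpM2r => //; exact: hj.
-
  set K := pnorm L2 c.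
  have hs : 0 < \sum_(i < d) c ord0 i ^+ 2.
    have h1 : 0 < c ord0 i0 ^+ 2 by rewrite lt_def sqrf_eq0 hi0 sqr_ge0.
    rewrite (bigD1 i0) //=; apply: (lt_le_trans h1); rewrite lerDl.
    by apply: sumr_ge0 => i _; rewrite sqr_ge0.
  have Kp : 0 < K by rewrite /K /= sqrtr_gt0.
  have K2 : K ^+ 2 = \sum_(i < d) c ord0 i ^+ 2 by rewrite /K /= sqr_sqrtr // ltW.
  exists (K^-1 *: c), K; split => //; split.
    have Kn0 : K != 0 by rewrite gt_eqF.
    rewrite pnormZ; last by rewrite invr_ge0 ltW.
    by change (K^-1 * K <= 1); rewrite mulVf.
  split; last by move=> v; exact: CS.
  rewrite dotZ /dot.
  have -> : \sum_(i < d) c ord0 i * c ord0 i = K ^+ 2 by rewrite K2; apply: eq_bigr => i _; rewrite expr2.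
  by rewrite expr2 mulrA mulVf ?mul1r // gt_eqF.
-
  pose w : 'rV[R]_d := \row_i sgn1 (c ord0 i).
  exists w, (\sum_(i < d) `|c ord0 i|); split.
    rewrite (bigD1 i0) //=; apply: (lt_le_trans ci0); rewrite lerDl.
    by apply: sumr_ge0.
  split.
    by rewrite /=; apply: bigmax_le => // i _; rewrite mxE sgn1_norm.
  split; first by rewrite /dot; apply: eq_bigr => i _; rewrite mxE sgn1_mul.
  move=> v; apply: (le_trans (dot_le_abs c v)); rewrite mulr_suml.
  apply: ler_sum => i _; apply: ler_wpM2l => //; exact: le_bigmaxR.
Qed.

End Dual.

Section Conv.
Variable R : realType.
Variable d : nat.
Variable S : set 'rV[R]_d.
Implicit Types (a b c v w : 'rV[R]_d).

Lemma conv_single u : S u -> conv_hull S u.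
Proof.
move=> Su; exists 1%N, (fun _ => u), (fun _ => 1); split => //; split => //.
by rewrite !big_ord1 scale1r.
Qed.

Lemma conv_comb a b t : conv_hull S a -> conv_hull S b -> 0 <= t <= 1 ->
  conv_hull S (t *: a + (1 - t) *: b).
Proof.
move=> [n [p [l [Sp [l0 [l1 ->]]]]]] [m [q [mu [Sq [mu0 [mu1 ->]]]]]] /andP[t0 t1].
pose pt := fun k : 'I_(n + m) => match split k with inl i => p i | inr j => q j end.
pose lam := fun k : 'I_(n + m) => match split k with inl i => t * l i | inr j => (1 - t) * mu j end.
have hl : forall i : 'I_n, split (lshift m i) = inl i.
  by move=> i; have := unsplitK (inl i : 'I_n + 'I_m).
have hr : forall j : 'I_m, split (rshift n j) = inr j.
  by move=> j; have := unsplitK (inr j : 'I_n + 'I_m).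
exists (n + m)%N, pt, lam; split; last split; last split.
- by move=> k; rewrite /pt; case: (split k).
- move=> k; rewrite /lam; case: (split k) => i; apply: mulr_ge0 => //.
  by rewrite subr_ge0.
- rewrite big_split_ord (eq_bigr (fun i => t * l i)); last by move=> i _; rewrite /lam hl.
  rewrite (eq_bigr (fun i => (1 - t) * mu i)); last by move=> i _; rewrite /lam hr.
  by rewrite -!mulr_sumr l1 mu1 /= !mulr1 addrC subrK.
- rewrite [RHS]big_split_ord !scaler_sumr; congr (_ + _); apply: eq_bigr => i _.
    by rewrite /lam /pt hl scalerA.
  by rewrite /lam /pt hr scalerA.
Qed.

End Conv.

Section Sep.
Variable R : realType.
Variable d : nat.
Variable S : set 'rV[R]_d.
Variable x : 'rV[R]_d.
Implicit Types (a b c g v w z : 'rV[R]_d).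

Definition EE k z := forall i : 'I_d, (k <= i)%N -> z ord0 i = x ord0 i.
Definition VV k c := (exists i : 'I_d, (i < k)%N /\ c ord0 i != 0) /\
                     (forall i : 'I_d, (k <= i)%N -> c ord0 i = 0).
Let C := conv_hull S.

Lemma comb_prop k (kk : 'I_d) (hk : nat_of_ord kk = k) a b :
  C a -> C b -> EE k.+1 a -> EE k.+1 b -> x ord0 kk < a ord0 kk -> b ord0 kk < x ord0 kk ->
  let t := (x ord0 kk - b ord0 kk) / (a ord0 kk - b ord0 kk) in
  C (t *: a + (1 - t) *: b) /\ EE k (t *: a + (1 - t) *: b) /\
  forall g, dot g (t *: a + (1 - t) *: b - x) = t * dot g (a - x) + (1 - t) * dot g (b - x).
Proof.
move=> Ca Cb Ea Eb ha hb t.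
have D0 : 0 < a ord0 kk - b ord0 kk by rewrite subr_gt0 (lt_trans hb ha).
have t0 : 0 <= t by rewrite /t divr_ge0 ?(ltW D0) // subr_ge0 ltW.
have t1 : t <= 1 by rewrite /t ler_pdivrMr // mul1r lerD2r ltW.
have tD : t * (a ord0 kk - b ord0 kk) = x ord0 kk - b ord0 kk by rewrite /t divfK // gt_eqF.
split; first by apply: conv_comb => //; rewrite t0 t1.
split.
  move=> i; rewrite leq_eqVlt => /orP[/eqP ik|ik].
    have -> : i = kk by apply: val_inj; rewrite /= hk ik.
    rewrite !mxE. 
    have -> : t * a ord0 kk + (1 - t) * b ord0 kk = t * (a ord0 kk - b ord0 kk) + b ord0 kk by ring.
    by rewrite tD subrK.
  by rewrite !mxE Ea // Eb //; ring.
move=> g; rewrite !dotB !dotD !dotZ; ring.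
Qed.

Definition ek (kk : 'I_d) : 'rV[R]_d := \row_i (if i == kk then 1 else 0).

Lemma dot_ek kk v : dot (ek kk) v = v ord0 kk.
Proof.
rewrite /dot (bigD1 kk) //= big1 ?addr0 => [|i hi]; first by rewrite mxE eqxx mul1r.
by rewrite mxE (negbTE hi) mul0r.
Qed.

Lemma sep k : (exists z, C z /\ EE k z) ->
  (forall c, VV k c -> exists z, C z /\ EE k z /\ 0 < dot c (z - x)) -> C x.
Proof.
elim: k => [|k IH] H1 H2.
  case: H1 => z [Cz Ez]; suff <- : z = x by [].
  by apply/matrixP => i j; rewrite (ord1 i); apply: Ez.
case: (ltnP k d) => hk; last first.
  have vac : forall z, EE k z.
    by move=> z i hi; move: (leq_trans hk hi); rewrite leqNgt ltn_ord.
  apply: IH.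
    by case: H1 => z [Cz _]; exists z; split.
  move=> c [[i [hi ci]] c0].
  have [z [Cz [_ hz]]] : exists z, C z /\ EE k.+1 z /\ 0 < dot c (z - x).
    apply: H2; split; first by exists i; split => //; apply: ltnW.
    by move=> j hj; apply: c0; apply: ltnW.
  by exists z.
pose kk := Ordinal hk.
have Vs : forall s, s != 0 -> VV k.+1 (s *: ek kk).
  move=> s s0; split; first by exists kk; split => //; rewrite mxE mxE eqxx mulr1.
  move=> i hi; rewrite !mxE.
  have -> : (i == kk) = false by apply/negbTE; apply/eqP => e; move: hi; rewrite e /= ltnn.
  by rewrite mulr0.
have [a [Ca [Ea ha]]] := H2 _ (Vs 1 (oner_neq0 _)).
rewrite dotZl mul1r dot_ek !mxE subr_gt0 in ha.
have m1 : (-1 : R) != 0 by rewrite oppr_eq0 oner_neq0.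
have [b [Cb [Eb hb]]] := H2 _ (Vs (-1) m1).
rewrite dotZl dot_ek !mxE mulN1r oppr_gt0 subr_lt0 in hb.
apply: IH.
  have [Cz [Ez _]] := comb_prop (kk:=kk) (k:=k) erefl Ca Cb Ea Eb ha hb.
  by eexists; split; [exact: Cz | exact: Ez].
move=> g [[i0 [hi0 gi0]] g0].
case: (pselect (exists z, C z /\ EE k z /\ 0 < dot g (z - x))) => // hneg.
have hle : forall z, C z -> EE k z -> dot g (z - x) <= 0.
  move=> z Cz Ez; rewrite leNgt; apply/negP => hz; apply: hneg; by exists z.
pose Rset := [set r : R | exists a, [/\ C a, EE k.+1 a, x ord0 kk < a ord0 kk &
                 r = dot g (a - x) / (a ord0 kk - x ord0 kk)]].
have key : forall a b, C a -> C b -> EE k.+1 a -> EE k.+1 b -> x ord0 kk < a ord0 kk ->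
    b ord0 kk < x ord0 kk ->
    dot g (a - x) / (a ord0 kk - x ord0 kk) <= - dot g (b - x) / (x ord0 kk - b ord0 kk).
  move=> a' b' Ca' Cb' Ea' Eb' ha' hb'.
  have [Cz [Ez hd]] := comb_prop (kk:=kk) (k:=k) erefl Ca' Cb' Ea' Eb' ha' hb'.
  have := hle _ Cz Ez; rewrite hd.
  set t := (_ / _).
  have D0 : 0 < a' ord0 kk - b' ord0 kk by rewrite subr_gt0 (lt_trans hb' ha').
  have tD : t * (a' ord0 kk - b' ord0 kk) = x ord0 kk - b' ord0 kk by rewrite /t divfK // gt_eqF.
  set al := a' ord0 kk - x ord0 kk. set be := x ord0 kk - b' ord0 kk.
  have alp : 0 < al by rewrite subr_gt0.
  have bep : 0 < be by rewrite subr_gt0.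
  set ga := dot g (a' - x). set de := dot g (b' - x).
  set rho := ga / al. set u := - de / be.
  have rhoE : rho * al = ga by rewrite /rho divfK // gt_eqF.
  have uE : u * be = - de by rewrite /u divfK // gt_eqF.
  have sum : a' ord0 kk - b' ord0 kk = al + be by rewrite /al /be; ring.
  rewrite sum in tD D0 => hcomb.
  have h2 : be * ga + al * de <= 0.
    have : (t * ga + (1 - t) * de) * (al + be) <= 0 by rewrite pmulr_lle0.
    have -> : (t * ga + (1 - t) * de) * (al + be) = (t * (al + be)) * ga + ((al + be) - t * (al + be)) * de by ring.
    by rewrite tD; have -> : al + be - be = al by ring.
  have h3 : 0 < al * be by apply: mulr_gt0.
  have h4 : al * be * (rho - u) <= 0.
    have -> : al * be * (rho - u) = be * (rho * al) + al * (- (u * be)) by ring.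
    by rewrite rhoE uE opprK.
  rewrite pmulr_rle0 // subr_le0 in h4.
  exact: h4.
pose T := sup Rset.
have Rne : Rset !=set0.
  by exists (dot g (a - x) / (a ord0 kk - x ord0 kk)); exists a; split.
have Rub : forall b', C b' -> EE k.+1 b' -> b' ord0 kk < x ord0 kk ->
    ubound Rset (- dot g (b' - x) / (x ord0 kk - b' ord0 kk)).
  move=> b' Cb' Eb' hb' r [a' [Ca' Ea' ha' ->]]; exact: key.
have hasub : has_ubound Rset by exists (- dot g (b - x) / (x ord0 kk - b ord0 kk)); exact: Rub.
pose c := g + (- T) *: ek kk.
have Vc : VV k.+1 c.
  split.
    exists i0; split; first exact: ltnW.
    rewrite !mxE.
    have -> : (i0 == kk) = false by apply/negbTE; apply/eqP => e; move: hi0; rewrite e /= ltnn.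
    by rewrite mulr0 addr0.
  move=> i hi; rewrite !mxE g0; last exact: ltnW.
  have -> : (i == kk) = false by apply/negbTE; apply/eqP => e; move: hi; rewrite e /= ltnn.
  by rewrite mulr0 addr0.
have [z [Cz [Ez hz]]] := H2 c Vc.
rewrite /c dotDl dotZl dot_ek !mxE in hz.
set ga := dot g (z - x) in hz.
case: (ltgtP (z ord0 kk) (x ord0 kk)) => hzk.
- have hT : T <= - ga / (x ord0 kk - z ord0 kk) by apply: ge_sup => //; exact: Rub.
  have bep : 0 < x ord0 kk - z ord0 kk by rewrite subr_gt0.
  have uE : (- ga / (x ord0 kk - z ord0 kk)) * (x ord0 kk - z ord0 kk) = - ga by rewrite divfK // gt_eqF.
  set u := (- ga / _) in hT uE.
  set be := x ord0 kk - z ord0 kk in bep uE hT.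
  have : be * (u - T) >= 0 by apply: mulr_ge0; [exact: ltW | rewrite subr_ge0].
  have e : z ord0 kk - x ord0 kk = - be by rewrite /be opprB.
  rewrite e in hz.
  move: hz; nra.
- have hT : ga / (z ord0 kk - x ord0 kk) <= T.
    by apply: (ub_le_sup hasub); exists z; split.
  have alp : 0 < z ord0 kk - x ord0 kk by rewrite subr_gt0.
  have rE : (ga / (z ord0 kk - x ord0 kk)) * (z ord0 kk - x ord0 kk) = ga by rewrite divfK // gt_eqF.
  set rho := (ga / _) in hT rE.
  set al := z ord0 kk - x ord0 kk in alp rE hT hz.
  have : al * (T - rho) >= 0 by apply: mulr_ge0; [exact: ltW | rewrite subr_ge0].
  move: hz; nra.
- have Ezk : EE k z.
    move=> i; rewrite leq_eqVlt => /orP[/eqP ik|ik].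
      by have -> : i = kk by apply: val_inj; rewrite /= ik.
    exact: Ez.
  have := hle z Cz Ezk; rewrite -/ga hzk subrr mulr0 addr0 in hz.
  by rewrite leNgt hz.
Qed.
End Sep.

Unset Implicit Arguments.
Set Strict Implicit.

Theorem lemma13 (R : realType) (p : normkind) (d : nat) (B : 'M[R]_d) (eps : R) :
  0 < eps -> B \in unitmx -> eps_lattice p B eps ->
  forall x : 'rV[R]_d, conv_hull (ball_p p x (7 * eps) `&` lattice B) x.
Proof.
move=> epos _ [_ [hge hle]] x.
set Cov := [set r : R | forall y : 'rV[R]_d, exists u, lattice B u /\ ball_p p u r y].
have cE : cover_radius p B = inf Cov by [].
have Cne : Cov !=set0.
  case: (pselect (Cov !=set0)) => // hne.
  have E0 : Cov = set0 by rewrite predeqE => r; split => // hr; apply: hne; exists r.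
  by move: hge; rewrite cE E0 inf0 leNgt epos.
have [r Cr rlt] : exists2 r, Cov r & r < 7 * eps / 2.
  apply: inf_lt => //; rewrite -cE; apply: (le_lt_trans hle); lra.
set s := 7 * eps / 2.
have spos : 0 < s by rewrite /s; lra.
apply: (@sep R d _ x d).
  have [u [Lu bu]] := Cr x.
  exists u; split; last by move=> i hi; move: (ltn_ord i); rewrite ltnNge hi.
  apply: conv_single; split => //.
  rewrite /ball_p /= -opprB pnormN; apply: (le_trans bu); rewrite /s in rlt; lra.
move=> c [[i [_ ci]] _].
have [w [K [Kp [wn [cw cK]]]]] := dual p (ex_intro _ i ci).
pose y := x + s *: w.
have [u [Lu bu]] := Cr y.
rewrite /ball_p /= in bu.
exists u; split.
  apply: conv_single; split => //.
  rewrite /ball_p /=.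
  have -> : u - x = s *: w + - (y - u) by rewrite /y; apply/rowP => j; rewrite !mxE; ring.
  apply: (le_trans (pnormD _ _ _)); rewrite pnormN pnormZ ?ltW //.
  have : s * pnorm p w <= s by rewrite -[leRHS]mulr1 ler_wpM2l // ltW.
  rewrite /s in rlt *; lra.
split; first by move=> j hj; move: (ltn_ord j); rewrite ltnNge hj.
have -> : u - x = s *: w + - (y - u) by rewrite /y; apply/rowP => j; rewrite !mxE; ring.
rewrite dotD dotZ dotN cw.
have h1 := cK (y - u).
have h2 : K * pnorm p (y - u) <= K * r by rewrite ler_wpM2l // ltW.
have h3 : K * r < K * s by rewrite ltr_pM2l.
lra.
Qed.
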